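(* Let $G_1=(\{p_j\},\{\mu_j\},\{\sigma_j^2\})_{j=1}^n$ and $G_2=(\{p'_k\},\{\mu'_k\},\{\sigma_k'^2\})_{k=1}^{n'}$ be univariate Gaussian mixtures with all $\sigma_j>0$, $\sigma'_k>0$. Then $$\begin{aligned}C_2^2(G_1,G_2)=&\sum_{j=1}^n\sum_{k=1}^{n'}p_jp'_k\sqrt{\sigma_j^2+\sigma_k'^2}\,\Big[U\Big(\tfrac{\mu_j-\mu'_k}{\sqrt{\sigma_j^2+\sigma_k'^2}}\Big)+U\Big(\tfrac{\mu'_k-\mu_j}{\sqrt{\sigma_j^2+\sigma_k'^2}}\Big)\Big]\\&-\sum_{j=1}^n\sum_{k=1}^n p_jp_k\sqrt{\sigma_j^2+\sigma_k^2}\,U\Big(\tfrac{\mu_j-\mu_k}{\sqrt{\sigma_j^2+\sigma_k^2}}\Big)-\sum_{j=1}^{n'}\sum_{k=1}^{n'}p'_jp'_k\sqrt{\sigma_j'^2+\sigma_k'^2}\,U\Big(\tfrac{\mu'_j-\mu'_k}{\sqrt{\sigma_j'^2+\sigma_k'^2}}\Big).\end{aligned}$$ Equivalently, with $V(x)=\frac{U(x)+U(-x)}{2}$, $$C_2^2(G_1,G_2)=2\sum_{j,k}p_jp'_k\sqrt{\sigma_j^2+\sigma_k'^2}\,V\Big(\tfrac{\mu_j-\mu'_k}{\sqrt{\sigma_j^2+\sigma_k'^2}}\Big)-\sum_{j,k=1}^n p_jp_k\sqrt{\sigma_j^2+\sigma_k^2}\,V\Big(\tfrac{\mu_j-\m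u_k}{\sqrt{\sigma_j^2+\sigma_k^2}}\Big)-\sum_{j,k=1}^{n'}p'_jp'_k\sqrt{\sigma_j'^2+\sigma_k'^2}\,V\Big(\tfrac{\mu'_j-\mu'_k}{\sqrt{\sigma_j'^2+\sigma_k'^2}}\Big).$$
   Context: A univariate Gaussian mixture $G=(\{p_j\},\{\mu_j\},\{\sigma_j^2\})_{j=1}^n$ has $p_j\ge0$, $\sum_jp_j=1$, $\mu_j\in\mathbb{R}$, and CDF $\mathrm{CDF}(G)(x)=\sum_j p_j\Phi((x-\mu_j)/\sigma_j)$, where $\Phi$ is the standard normal CDF. The Cramér 2-distance is $C_2(G_1,G_2)=\left(\int_{\mathbb{R}}|\mathrm{CDF}(G_1)(x)-\mathrm{CDF}(G_2)(x)|^2dx\right)^{1/2}$. $U(x)=x\Phi(x)+\frac{1}{\sqrt{2\pi}}e^{-x^2/2}$. *)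

(* Defs.v *)
From Stdlib Require Import Reals.
From Coquelicot Require Import Coquelicot.
Open Scope R_scope.

Fixpoint sumR (n : nat) (f : nat -> R) : R :=
  match n with
  | O => 0
  | S m => sumR m f + f m
  end.

Definition phi (t : R) : R := exp (- t ^ 2 / 2) / sqrt (2 * PI).
Definition Phi (x : R) : R := RInt_gen phi (Rbar_locally m_infty) (at_point x).

Definition U (x : R) : R := x * Phi x + / sqrt (2 * PI) * exp (- x ^ 2 / 2).

(* a mixture with n components, weights p, means mu, std deviations s
   (indices 0..n-1) *)
Definition is_mixture (n : nat) (p mu s : nat -> R) : Prop :=
  (forall j, (j < n)%nat -> 0 <= p j) /\ sumR n p = 1.

Definition CDF (n : nat) (p mu s : nat -> R) (x : R) : R :=
  sumR n (fun j => p j * Phi ((x - mu j) / s j)).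

Definition C2 (n : nat) (p mu s : nat -> R) (n' : nat) (p' mu' s' : nat -> R) : R :=
  sqrt (RInt_gen (fun x => (CDF n p mu s x - CDF n' p' mu' s' x) ^ 2)
          (Rbar_locally m_infty) (Rbar_locally p_infty)).

Definition cross (n : nat) (p mu s : nat -> R) (n' : nat) (p' mu' s' : nat -> R) : R :=
  sumR n (fun j => sumR n' (fun k =>
    p j * p' k * sqrt (s j ^ 2 + s' k ^ 2) *
    (U ((mu j - mu' k) / sqrt (s j ^ 2 + s' k ^ 2))
     + U ((mu' k - mu j) / sqrt (s j ^ 2 + s' k ^ 2))))).

Definition self (n : nat) (p mu s : nat -> R) : R :=
  sumR n (fun j => sumR n (fun k =>
    p j * p k * sqrt (s j ^ 2 + s k ^ 2) *
    U ((mu j - mu k) / sqrt (s j ^ 2 + s k ^ 2)))).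

(* Main.v *)
Require Import Defs.
From Stdlib Require Import Reals Lra Lia Psatz.
From Coquelicot Require Import Coquelicot.
Open Scope R_scope.

Lemma ftc_gen (F f : R -> R) (Fa Fb : (R->Prop)->Prop) la lb :
  Filter Fa -> Filter Fb ->
  (forall x, is_derive F x (f x)) -> (forall x, continuous f x) ->
  filterlim F Fa (locally la) -> filterlim F Fb (locally lb) ->
  is_RInt_gen f Fa Fb (lb - la).
Proof.
  intros HFa HFb Hd Hc H1 H2.
  apply is_RInt_gen_ext with (Derive F).
  - apply filter_forall. intros ab x _. apply is_derive_unique, Hd.
  - apply is_RInt_gen_Derive; auto.
    + apply filter_forall. intros ab x _. eexists; apply Hd.
    + apply filter_forall. intros ab x _.
      apply continuous_ext with f. intros; symmetry; apply is_derive_unique, Hd.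
      apply Hc.
Qed.
Ltac rr := cbv beta; match goal with |- ?a = ?b => change (@eq R a b) end; first [ring | field].

Definition E (t:R) := exp (- t^2/2).
Definition I (x:R) := RInt E 0 x.
Definition kf (x u : R) := exp (-(x^2)*(1+u^2)/2) / (1+u^2).
Definition K (x:R) := RInt (kf x) 0 1.

Lemma exd_cont (f : R -> R) x : ex_derive f x -> continuous f x.
Proof. intros H. exact (ex_derive_continuous f x H). Qed.

Lemma exR (f : R -> R) a b : (forall z, continuous f z) -> ex_RInt f a b.
Proof. intros H. apply (ex_RInt_continuous (V:=R_CompleteNormedModule)). intros; apply H. Qed.

Lemma RInt_kl (f : R -> R) a b k : ex_RInt f a b -> RInt (fun x => k * f x) a b = k * RInt f a b.
Proof. intros H. exact (RInt_scal (V:=R_CompleteNormedModule) f a b k H). Qed.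

Lemma RInt_lin (f : R -> R) u v a b : ex_RInt f (u*a+v) (u*b+v) ->
  RInt (fun y => u * f (u*y+v)) a b = RInt f (u*a+v) (u*b+v).
Proof. intros H. exact (RInt_comp_lin (V:=R_CompleteNormedModule) f u v a b H). Qed.

Lemma is_RInt_der (F f : R -> R) a b :
  (forall x, Rmin a b <= x <= Rmax a b -> is_derive F x (f x)) ->
  (forall x, Rmin a b <= x <= Rmax a b -> continuous f x) ->
  is_RInt f a b (F b - F a).
Proof. intros H1 H2. exact (is_RInt_derive (V:=R_CompleteNormedModule) F f a b H1 H2). Qed.

Lemma E_cont x : continuous E x.
Proof. apply exd_cont. unfold E. auto_derive. auto. Qed.

Lemma E_pos x : 0 < E x.
Proof. apply exp_pos. Qed.

Lemma I_deriv x : is_derive I x (E x).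
Proof.
  apply is_derive_RInt with (a:=0).
  - apply filter_forall; intros; apply RInt_correct, ex_RInt_continuous; intros; apply E_cont.
  - apply E_cont.
Qed.

Lemma cont2d_exp f x y : continuity_2d_pt f x y ->
  continuity_2d_pt (fun u v => exp (f u v)) x y.
Proof.
  rewrite !continuity_2d_pt_filterlim. intros H.
  eapply filterlim_comp. exact H.
  apply continuity_pt_filterlim, derivable_continuous_pt, derivable_pt_exp.
Qed.

Lemma onepsq_pos u : 0 < 1 + u^2.
Proof. nra. Qed.

Lemma kf_cont x u : continuous (kf x) u.
Proof. apply exd_cont. unfold kf. auto_derive. pose proof (onepsq_pos u). lra. Qed.

Lemma deriv0_const f : (forall x, is_derive f x 0) -> forall x y, f x = f y.
Proof.
  intros H x y.
  destruct (MVT_gen f x y (fun _ => 0)) as [c [_ Hc]].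
  - intros; apply H.
  - intros z _. apply continuity_pt_filterlim. apply exd_cont. eexists; apply H.
  - lra.
Qed.

Lemma E_mul x t : exp (-(x^2)*(1+t^2)/2) = E x * E (x*t+0).
Proof. unfold E. rewrite <- exp_plus. apply f_equal. field. Qed.

Lemma K_deriv x : is_derive K x (- E x * I x).
Proof.
  assert (HD : forall u v, is_derive (fun z => kf z v) u (- u * exp (-(u^2)*(1+v^2)/2))).
  { intros u v. unfold kf. auto_derive. pose proof (onepsq_pos v); lra.
    replace (- (u * (u * 1)) * (1 + v * (v * 1)) * / 2) with (-(u^2)*(1+v^2)/2) by field. field. pose proof (onepsq_pos v); lra. }
  unfold K.
  assert (H := is_derive_RInt_param kf 0 1 x).
  replace (- E x * I x) with (RInt (fun t => Derive (fun u => kf u t) x) 0 1).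
  apply H.
  - apply filter_forall. intros x0 t _. eexists; apply HD.
  - intros t _. apply continuity_2d_pt_ext with (fun u v => - u * exp (-(u^2)*(1+v^2)/2)).
    intros; symmetry; apply is_derive_unique, HD.
    apply continuity_2d_pt_mult.
    apply continuity_2d_pt_opp, continuity_2d_pt_id1.
    apply cont2d_exp.
    apply continuity_2d_pt_ext with (fun u v => (-1/2) * ((u * u) * (1 + v * v))).
    intros; simpl; field.
    repeat first [apply continuity_2d_pt_mult | apply continuity_2d_pt_plus
      | apply continuity_2d_pt_id1 | apply continuity_2d_pt_id2 | apply continuity_2d_pt_const].
  - apply filter_forall. intros y. apply exR. intros; apply kf_cont.
  - rewrite (RInt_ext _ (fun t => (- E x) * (x * (E (x*t+0))))).
    rewrite RInt_kl. rewrite RInt_lin. unfold I. f_equal; f_equal; field.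
    apply exR; intros; apply E_cont.
    apply exR; intros. apply exd_cont. unfold E. auto_derive. auto.
    intros t _. transitivity (- x * exp (-(x^2)*(1+t^2)/2)). { apply is_derive_unique, HD. } rewrite E_mul. generalize (E x) (E (x*t+0)); intros; simpl; ring.
Qed.

Lemma atan_int : RInt (fun u => / (1 + u^2)) 0 1 = PI/4.
Proof.
  apply is_RInt_unique.
  replace (PI/4) with (atan 1 - atan 0).
  apply is_RInt_der.
  intros. apply is_derive_Reals, derivable_pt_lim_atan.
  intros. apply exd_cont. auto_derive. pose proof (onepsq_pos x); lra.
  rewrite atan_1, atan_0. field.
Qed.

Lemma der_mul (f g : R -> R) x df dg : is_derive f x df -> is_derive g x dg ->
  is_derive (fun t => f t * g t) x (df * g x + f x * dg).
Proof. intros H1 H2. exact (is_derive_mult f g x df dg H1 H2 Rmult_comm). Qed.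

Lemma der_plus (f g : R -> R) x df dg : is_derive f x df -> is_derive g x dg ->
  is_derive (fun t => f t + g t) x (df + dg).
Proof. intros H1 H2. exact (is_derive_plus f g x df dg H1 H2). Qed.

Lemma der_ext (f g : R -> R) x d d' : (forall t, f t = g t) -> d = d' -> is_derive f x d -> is_derive g x d'.
Proof. intros H He H1. rewrite <- He. exact (is_derive_ext f g x d H H1). Qed.

Lemma der_const (c : R) x : is_derive (fun _ => c) x 0.
Proof. exact (is_derive_const c x). Qed.

Lemma h_const x : (I x)^2 + 2 * K x = PI/2.
Proof.
  assert (Hd : forall y, is_derive (fun x => (I x)^2 + 2 * K x) y 0).
  { intros y. eapply der_ext with (f := fun t => I t * I t + (fun _ => 2) t * K t).
    intros; simpl; ring. 2: apply der_plus; [apply der_mul; apply I_deriv | apply der_mul; [apply der_const|apply K_deriv]].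
    rr. }
  rewrite (deriv0_const _ Hd x 0).
  unfold I. rewrite RInt_point. unfold K.
  rewrite (RInt_ext _ (fun u => / (1 + u^2))). rewrite atan_int. unfold zero; simpl. field.
  intros u _. unfold kf. replace (-(0^2)*(1+u^2)/2) with 0 by field. rewrite exp_0. rr.
  pose proof (onepsq_pos u); lra.
Qed.

Lemma lim_negsq : is_lim (fun x => - x^2/2) p_infty m_infty.
Proof.
  intros P [M HM]. exists (Rabs M + 1). intros x Hx. apply HM.
  pose proof (Rabs_pos M). destruct (Rle_or_lt 0 M).
  - nra.
  - rewrite Rabs_left in Hx by lra. nra.
Qed.

Lemma lim_negsq_m : is_lim (fun x => - x^2/2) m_infty m_infty.
Proof.
  intros P [M HM]. exists (-(Rabs M + 1)). intros x Hx. apply HM.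
  pose proof (Rabs_pos M). destruct (Rle_or_lt 0 M).
  - nra.
  - rewrite Rabs_left in Hx by lra. nra.
Qed.

Lemma E_lim_p : is_lim E p_infty 0.
Proof.
  unfold E. eapply is_lim_comp. apply is_lim_exp_m. apply lim_negsq.
  exists 0. intros; discriminate.
Qed.

Lemma E_lim_m : is_lim E m_infty 0.
Proof.
  unfold E. eapply is_lim_comp. apply is_lim_exp_m. apply lim_negsq_m.
  exists 0. intros; discriminate.
Qed.

Lemma K_bounds x : 0 <= K x <= E x.
Proof.
  assert (Hk : forall u, 0 <= u -> 0 <= kf x u <= E x).
  { intros u Hu. unfold kf, E. pose proof (onepsq_pos u). split.
    apply Rdiv_le_0_compat; [apply Rlt_le, exp_pos | lra].
    apply Rle_trans with (exp (- (x ^ 2) * (1 + u ^ 2) / 2)).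
    apply Rmult_le_reg_r with (1 + u^2); auto.
    unfold Rdiv; rewrite Rmult_assoc, Rinv_l by lra.
    pose proof (exp_pos (- x ^ 2 * (1 + u ^ 2) * / 2)). nra.
    destruct (Req_dec (- x ^ 2 * (1 + u ^ 2) / 2) (- x ^ 2 / 2)) as [e|n].
    rewrite e; lra. apply Rlt_le, exp_increasing. nra. }
  unfold K. split.
  - apply RInt_ge_0. lra. apply exR; intros; apply kf_cont. intros u Hu; apply Hk; lra.
  - apply Rle_trans with (RInt (fun _ => E x) 0 1).
    apply RInt_le. lra. apply exR; intros; apply kf_cont. apply exR; intros; apply continuous_const.
    intros u Hu; apply Hk; lra.
    rewrite RInt_const. unfold scal; simpl; unfold mult; simpl. lra.
Qed.

Lemma K_lim : is_lim K p_infty 0.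
Proof.
  apply is_lim_le_le_loc with (fun _ => 0) E.
  - exists 0. intros; apply K_bounds.
  - apply is_lim_const.
  - apply E_lim_p.
Qed.

Lemma I_nonneg x : 0 <= x -> 0 <= I x.
Proof.
  intros. unfold I. apply RInt_ge_0; auto. apply exR; intros; apply E_cont.
  intros; apply Rlt_le, E_pos.
Qed.

Lemma I_lim : is_lim I p_infty (sqrt (PI/2)).
Proof.
  apply is_lim_ext_loc with (fun x => sqrt (PI/2 - 2 * K x)).
  - exists 0. intros x Hx. rewrite <- (h_const x).
    replace ((I x)^2 + 2 * K x - 2 * K x) with ((I x)^2) by ring.
    apply sqrt_pow2, I_nonneg; lra.
  - apply is_lim_comp_continuous with (f := fun x => PI/2 - 2 * K x).
    eapply is_lim_minus. apply is_lim_const. apply is_lim_scal_l. apply K_lim.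
    unfold is_Rbar_minus, is_Rbar_plus; simpl. f_equal. f_equal. ring.
    apply continuity_pt_filterlim, sqrt_continuity_pt. pose proof PI_RGT_0; lra.
Qed.

Definition G (x : R) := RInt phi 0 x.

Lemma phi_E t : phi t = / sqrt (2*PI) * E t.
Proof. unfold phi, E. unfold Rdiv. ring. Qed.

Lemma sqrt2pi_pos : 0 < sqrt (2*PI).
Proof. apply sqrt_lt_R0. pose proof PI_RGT_0; lra. Qed.

Lemma phi_cont x : continuous phi x.
Proof. apply exd_cont. unfold phi. auto_derive. pose proof sqrt2pi_pos; lra. Qed.

Lemma phi_pos x : 0 < phi x.
Proof. rewrite phi_E. pose proof sqrt2pi_pos. pose proof (E_pos x).
  apply Rmult_lt_0_compat; auto. apply Rinv_0_lt_compat; auto. Qed.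

Lemma phi_even x : phi (-x) = phi x.
Proof. unfold phi. replace ((-x)^2) with (x^2) by ring. reflexivity. Qed.

Lemma G_I x : G x = / sqrt (2*PI) * I x.
Proof.
  unfold G, I. rewrite (RInt_ext _ (fun t => / sqrt (2*PI) * E t)).
  apply RInt_kl. apply exR; intros; apply E_cont.
  intros; apply phi_E.
Qed.

Lemma G_deriv x : is_derive G x (phi x).
Proof.
  apply is_derive_RInt with (a:=0).
  - apply filter_forall; intros; apply RInt_correct, exR; intros; apply phi_cont.
  - apply phi_cont.
Qed.

Lemma half_eq : / sqrt (2*PI) * sqrt (PI/2) = 1/2.
Proof.
  pose proof PI_RGT_0.
  replace (sqrt (PI/2)) with (sqrt (2*PI) * / 2).
  field. pose proof sqrt2pi_pos; lra.
  replace (PI/2) with ((2*PI) * (/2)^2) by field. symmetry. rewrite (sqrt_mult_alt (2*PI)) by lra.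
  rewrite sqrt_pow2 by lra. reflexivity.
Qed.

Lemma G_lim_p : is_lim G p_infty (1/2).
Proof.
  apply is_lim_ext with (fun x => / sqrt (2*PI) * I x).
  intros; symmetry; apply G_I.
  rewrite <- half_eq. apply (is_lim_scal_l I (/ sqrt (2 * PI)) p_infty (sqrt (PI/2))).
  apply I_lim.
Qed.

Lemma G_odd x : G (-x) = - G x.
Proof.
  unfold G.
  assert (H := RInt_lin phi (-1) 0 0 x).
  replace (-1 * 0 + 0) with 0 in H by ring. replace (-1 * x + 0) with (-x) in H by ring.
  rewrite <- H. 2: apply exR; intros; apply phi_cont.
  rewrite (RInt_ext _ (fun y => -1 * phi y)). rewrite RInt_kl. rr.
  apply exR; intros; apply phi_cont.
  intros. f_equal. replace (-1 * x0 + 0) with (- x0) by ring. apply phi_even.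
Qed.

Lemma G_lim_m : is_lim G m_infty (-1/2).
Proof.
  apply is_lim_ext with (fun x => - G (- x)).
  intros; rewrite G_odd; ring.
  replace (-1/2) with (- (1/2)) by field.
  apply (is_lim_opp (fun x => G (-x)) m_infty (1/2)).
  eapply is_lim_comp. apply G_lim_p.
  apply (is_lim_opp (fun x => x) m_infty m_infty). apply is_lim_id.
  exists 0. intros; discriminate.
Qed.

Lemma lim_p (f : R -> R) (l : R) : is_lim f p_infty l -> filterlim f (Rbar_locally p_infty) (locally l).
Proof. intros H. exact H. Qed.
Lemma lim_m (f : R -> R) (l : R) : is_lim f m_infty l -> filterlim f (Rbar_locally m_infty) (locally l).
Proof. intros H. exact H. Qed.

Lemma lim_pt (f : R -> R) x : filterlim f (at_point x) (locally (f x)).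
Proof. intros P HP. unfold filtermap, at_point. exact (locally_singleton _ _ HP). Qed.

Lemma Phi_eq x : Phi x = G x + 1/2.
Proof.
  unfold Phi. apply is_RInt_gen_unique.
  replace (G x + 1/2) with (G x - (-1/2)) by field.
  apply ftc_gen with (F := G). apply Rbar_locally_filter. apply at_point_filter.
  apply G_deriv. apply phi_cont. apply lim_m, G_lim_m. apply lim_pt.
Qed.

Lemma Phi_deriv x : is_derive Phi x (phi x).
Proof.
  apply der_ext with (f := fun t => G t + 1/2) (d := phi x + 0).
  intros; symmetry; apply Phi_eq. rr.
  apply der_plus. apply G_deriv. apply der_const.
Qed.

Lemma Phi_cont x : continuous Phi x.
Proof. apply exd_cont. eexists. apply Phi_deriv. Qed.

Lemma Phi_lim_p : is_lim Phi p_infty 1.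
Proof.
  apply is_lim_ext with (fun t => G t + 1/2). intros; symmetry; apply Phi_eq.
  eapply is_lim_plus. apply G_lim_p. apply is_lim_const.
  unfold is_Rbar_plus; simpl. f_equal. f_equal. field.
Qed.

Lemma Phi_lim_m : is_lim Phi m_infty 0.
Proof.
  apply is_lim_ext with (fun t => G t + 1/2). intros; symmetry; apply Phi_eq.
  eapply is_lim_plus. apply G_lim_m. apply is_lim_const.
  unfold is_Rbar_plus; simpl. f_equal. f_equal. field.
Qed.

Lemma Phi_sym x : Phi (-x) = 1 - Phi x.
Proof. rewrite !Phi_eq, G_odd. field. Qed.

Lemma Phi_incr x y : x < y -> Phi x < Phi y.
Proof.
  intros H. apply (incr_function Phi m_infty p_infty phi); auto.
  intros; apply Phi_deriv. intros; apply phi_pos. exact Logic.I. exact Logic.I.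
Qed.

Lemma incr_bound_p (f : R -> R) (l : R) x : (forall u v, u < v -> f u <= f v) ->
  is_lim f p_infty l -> f x <= l.
Proof.
  intros Hm Hl.
  assert (H := is_lim_le_loc (fun _ => f x) f p_infty (f x) l).
  apply H. exists x. intros y Hy. apply Hm; auto. apply is_lim_const. auto.
Qed.

Lemma incr_bound_m (f : R -> R) (l : R) x : (forall u v, u < v -> f u <= f v) ->
  is_lim f m_infty l -> l <= f x.
Proof.
  intros Hm Hl.
  assert (H := is_lim_le_loc f (fun _ => f x) m_infty l (f x)).
  apply H. exists x. intros y Hy. apply Hm; auto. auto. apply is_lim_const.
Qed.

Lemma Phi_bounds x : 0 < Phi x < 1.
Proof.
  assert (Hm : forall u v, u < v -> Phi u <= Phi v) by (intros; apply Rlt_le, Phi_incr; auto).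
  split.
  - apply Rle_lt_trans with (Phi (x-1)). apply incr_bound_m with (f := Phi); auto. apply Phi_lim_m.
    apply Phi_incr; lra.
  - apply Rlt_le_trans with (Phi (x+1)). apply Phi_incr; lra.
    apply incr_bound_p with (f := Phi); auto. apply Phi_lim_p.
Qed.

Lemma mono_lim_p (F : R -> R) M : (forall x y, x <= y -> F x <= F y) -> (forall x, F x <= M) ->
  exists L : R, is_lim F p_infty L.
Proof.
  intros Hm HM.
  destruct (completeness (fun v => exists x, v = F x)) as [L [HL1 HL2]].
  - exists M. intros v [x ->]. apply HM.
  - exists (F 0), 0. auto.
  - exists L. apply is_lim_spec. intros eps.
    assert (Hx : exists x0, L - eps < F x0).
    { apply Classical_Prop.NNPP. intros Hn.
      assert (L <= L - eps). apply HL2. intros v [x ->].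
      destruct (Rle_or_lt (F x) (L - eps)); auto. exfalso; apply Hn; exists x; auto.
      destruct eps; simpl in *; lra. }
    destruct Hx as [x0 Hx0]. exists x0. intros y Hy.
    assert (F x0 <= F y) by (apply Hm; lra).
    assert (F y <= L) by (apply HL1; exists y; auto).
    apply Rabs_def1; destruct eps; simpl in *; lra.
Qed.

Lemma mono_lim_m (F : R -> R) M : (forall x y, x <= y -> F x <= F y) -> (forall x, M <= F x) ->
  exists L : R, is_lim F m_infty L.
Proof.
  intros Hm HM.
  destruct (mono_lim_p (fun x => - F (- x)) (- M)) as [L HL].
  - intros x y H. apply Ropp_le_contravar, Hm; lra.
  - intros x. specialize (HM (-x)); lra.
  - exists (- L). apply is_lim_ext with (fun x => - (- F (- (- x)))).
    intros; rewrite !Ropp_involutive; reflexivity.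
    apply (is_lim_opp (fun x => - F (- (- x))) m_infty L).
    apply (is_lim_comp (fun x => - F (-x)) (fun x => -x) m_infty L p_infty). apply HL.
    apply (is_lim_opp (fun x => x) m_infty m_infty). apply is_lim_id.
    exists 0. intros; discriminate.
Qed.

Lemma phi_lim_m : is_lim phi m_infty 0.
Proof.
  apply is_lim_ext with (fun t => / sqrt (2*PI) * E t). intros; symmetry; apply phi_E.
  replace (Finite 0) with (Rbar_mult (/ sqrt (2*PI)) 0) by (simpl; f_equal; ring).
  apply is_lim_scal_l, E_lim_m.
Qed.

Lemma phi_lim_p : is_lim phi p_infty 0.
Proof.
  apply is_lim_ext with (fun t => / sqrt (2*PI) * E t). intros; symmetry; apply phi_E.
  replace (Finite 0) with (Rbar_mult (/ sqrt (2*PI)) 0) by (simpl; f_equal; ring).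
  apply is_lim_scal_l, E_lim_p.
Qed.

Lemma phi_deriv x : is_derive phi x (- x * phi x).
Proof. unfold phi. auto_derive. pose proof sqrt2pi_pos; lra. replace (- (x * (x * 1)) * / 2) with (- x ^ 2 / 2) by rr. rr. pose proof sqrt2pi_pos; lra. Qed.

Lemma mills y : y < 0 -> Phi y <= phi y / (- y).
Proof.
  intros Hy.
  set (k := fun y => phi y / (- y) - Phi y).
  assert (Hd : forall x, x < 0 -> is_derive k x (phi x / x^2)).
  { intros x Hx. unfold k.
    apply der_ext with (f := fun t => phi t * (/ (- t)) + (-1) * Phi t)
      (d := (- x * phi x * / (- x) + phi x * (/ x^2)) + (-1) * phi x).
    intros; unfold Rdiv; simpl; ring.
    change (@eq R (- x * phi x * / - x + phi x * / x ^ 2 + (-1 * phi x)) (phi x / x ^ 2)).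
    field. lra.
    apply der_plus.
    2: apply (is_derive_scal Phi x (-1) (phi x)), Phi_deriv.
    apply (der_mul phi (fun t => / - t)). apply phi_deriv.
    auto_derive. lra. rr. lra. }
  assert (Hinc : forall u v, u < v -> v < 0 -> k u < k v).
  { intros u v Huv Hv. apply (incr_function k m_infty 0 (fun x => phi x / x^2)).
    - intros x _ Hx. apply Hd. simpl in Hx; auto.
    - intros x _ Hx. simpl in Hx. apply Rdiv_lt_0_compat. apply phi_pos. nra.
    - exact Logic.I.
    - auto.
    - simpl; auto. }
  assert (Hlim : is_lim k m_infty 0).
  { unfold k. replace (Finite 0) with (Rbar_minus 0 0) by (simpl; f_equal; ring).
    apply (is_lim_minus (fun y => phi y / - y) Phi m_infty 0 0).
    apply is_lim_le_le_loc with (fun _ => 0) phi.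
    exists (-1). intros t Ht. pose proof (phi_pos t). split.
    apply Rdiv_le_0_compat; lra.
    apply Rmult_le_reg_r with (-t). lra. unfold Rdiv. rewrite Rmult_assoc, Rinv_l by lra. nra.
    apply is_lim_const. apply phi_lim_m. apply Phi_lim_m.
    try (unfold is_Rbar_minus, is_Rbar_plus; simpl; f_equal; f_equal; ring). }
  assert (0 <= k y).
  { assert (H := is_lim_le_loc k (fun _ => k y) m_infty 0 (k y)).
    simpl in H. apply H. exists y. intros x Hx. apply Rlt_le, Hinc; auto.
    exact Hlim. apply is_lim_const. }
  unfold k in H. lra.
Qed.

Lemma yPhi_lim : is_lim (fun y => y * Phi y) m_infty 0.
Proof.
  apply is_lim_le_le_loc with (fun y => - phi y) (fun _ => 0).
  - exists 0. intros y Hy. pose proof (mills y Hy). pose proof (Phi_bounds y).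
    split. 2: nra.
    assert (Phi y * (-y) <= phi y).
    { apply Rmult_le_reg_r with (/ (-y)). apply Rinv_0_lt_compat; lra.
      rewrite Rmult_assoc, Rinv_r by lra. rewrite Rmult_1_r. exact H. }
    lra.
  - replace (Finite 0) with (Rbar_opp 0) by (simpl; f_equal; ring).
    apply is_lim_opp, phi_lim_m.
  - apply is_lim_const.
Qed.

Lemma yPhic_lim : is_lim (fun y => y * (1 - Phi y)) p_infty 0.
Proof.
  apply is_lim_ext with (fun y => - ((- y) * Phi (- y))).
  intros; rewrite Phi_sym; ring.
  replace (Finite 0) with (Rbar_opp 0) by (simpl; f_equal; ring).
  apply (is_lim_opp (fun y => (- y) * Phi (- y)) p_infty 0).
  apply (is_lim_comp (fun y => y * Phi y) (fun y => -y) p_infty 0 m_infty).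
  apply yPhi_lim.
  apply (is_lim_opp (fun x => x) p_infty p_infty). apply is_lim_id.
  exists 0. intros; discriminate.
Qed.

Notation mI := (Rbar_locally m_infty).
Notation pI := (Rbar_locally p_infty).

Lemma ftc_R (F f : R -> R) (L1 L2 : R) :
  (forall x, is_derive F x (f x)) -> (forall x, continuous f x) ->
  is_lim F m_infty L1 -> is_lim F p_infty L2 -> is_RInt_gen f mI pI (L2 - L1).
Proof.
  intros. apply ftc_gen with F; auto; try apply Rbar_locally_filter; try (apply lim_m; auto); try (apply lim_p; auto).
Qed.

Lemma RInt_ch (f : R -> R) a b c : (forall x, continuous f x) ->
  RInt f a b + RInt f b c = RInt f a c.
Proof.
  intros H. exact (RInt_Chasles (V:=R_CompleteNormedModule) f a b c (exR f a b H) (exR f b c H)).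
Qed.

Lemma RInt_val (F f : R -> R) a b : (forall x, is_derive F x (f x)) -> (forall x, continuous f x) ->
  RInt f a b = F b - F a.
Proof. intros. apply is_RInt_unique, is_RInt_der; auto. Qed.

Lemma RInt_prim_deriv (f : R -> R) x : (forall x, continuous f x) -> is_derive (fun x => RInt f 0 x) x (f x).
Proof.
  intros H. apply is_derive_RInt with (a:=0).
  - apply filter_forall; intros; apply RInt_correct, exR; auto.
  - apply H.
Qed.

Lemma prim_lims (f g Gp : R -> R) M :
  (forall x, continuous f x) -> (forall x, 0 <= f x <= g x) ->
  (forall x, is_derive Gp x (g x)) -> (forall x, continuous g x) -> (forall x, Rabs (Gp x) <= M) ->
  exists L1 L2 : R, is_lim (fun x => RInt f 0 x) m_infty L1 /\ is_lim (fun x => RInt f 0 x) p_infty L2.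
Proof.
  intros Hf Hfg Hg Hgc HM.
  assert (Hmon : forall x y, x <= y -> RInt f 0 x <= RInt f 0 y).
  { intros x y Hxy. rewrite <- (RInt_ch f 0 x y Hf).
    assert (0 <= RInt f x y). apply RInt_ge_0; auto. apply exR; auto. intros; apply Hfg. lra. }
  assert (Hb : forall x, Rabs (RInt f 0 x) <= 2 * M).
  { intros x. assert (Hv := fun a b => RInt_val Gp g a b Hg Hgc).
    pose proof (HM x); pose proof (HM 0).
    destruct (Rle_or_lt 0 x).
    - assert (0 <= RInt f 0 x) by (apply RInt_ge_0; auto; [apply exR; auto | intros; apply Hfg]).
      assert (RInt f 0 x <= RInt g 0 x) by (apply RInt_le; auto; try (apply exR; auto); intros; apply Hfg).
      rewrite Hv in H3. apply Rabs_le. apply Rabs_le_between in H; apply Rabs_le_between in H0. lra.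
    - rewrite <- (opp_RInt_swap (V:=R_CompleteNormedModule)) by (apply exR; auto).
      assert (0 <= RInt f x 0) by (apply RInt_ge_0; [lra | apply exR; auto | intros; apply Hfg]).
      assert (RInt f x 0 <= RInt g x 0) by (apply RInt_le; [lra|apply exR; auto|apply exR;auto| intros; apply Hfg]).
      rewrite Hv in H3. apply Rabs_le. apply Rabs_le_between in H; apply Rabs_le_between in H0.
      unfold opp; simpl. lra. }
  destruct (mono_lim_m (fun x => RInt f 0 x) (- (2*M))) as [L1 H1]; auto.
  intros x; specialize (Hb x); apply Rabs_le_between in Hb; lra.
  destruct (mono_lim_p (fun x => RInt f 0 x) (2*M)) as [L2 H2]; auto.
  intros x; specialize (Hb x); apply Rabs_le_between in Hb; lra.
  exists L1, L2; auto.
Qed.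

Definition nd (m s x : R) := phi ((x - m) / s) / s.
Definition nc (m s x : R) := Phi ((x - m) / s).

Lemma nc_deriv m s x : s <> 0 -> is_derive (nc m s) x (nd m s x).
Proof.
  intros Hs. unfold nc, nd.
  apply der_ext with (f := fun t => Phi ((t - m)/s)) (d := / s * phi ((x - m)/s)); auto.
  rr; auto.
  apply (is_derive_comp Phi (fun t => (t - m)/s)). apply Phi_deriv.
  auto_derive; auto. rr; auto.
Qed.

Lemma nd_deriv m s x : s <> 0 -> is_derive (nd m s) x (- (x - m) / s^2 * nd m s x).
Proof.
  intros Hs. unfold nd.
  apply der_ext with (f := fun t => / s * phi ((t - m)/s)) (d := / s * (/ s * (- ((x-m)/s) * phi ((x - m)/s)))); auto.
  intros; unfold Rdiv; ring. change (@eq R (/ s * (/ s * (- ((x - m) / s) * phi ((x - m) / s))))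
    (- (x - m) / s ^ 2 * (phi ((x - m) / s) / s))). field; auto.
  apply (is_derive_scal (fun t => phi ((t - m)/s)) x (/ s)).
  apply der_ext with (f := fun t => phi ((t - m)/s)) (d := / s * (- ((x-m)/s) * phi ((x - m)/s))); auto.
  apply (is_derive_comp phi (fun t => (t - m)/s)). apply phi_deriv.
  auto_derive; auto. field; auto.
Qed.

Lemma nd_cont m s x : s <> 0 -> continuous (nd m s) x.
Proof. intros; apply exd_cont; eexists; apply nd_deriv; auto. Qed.
Lemma nc_cont m s x : s <> 0 -> continuous (nc m s) x.
Proof. intros; apply exd_cont; eexists; apply nc_deriv; auto. Qed.

Lemma nd_pos m s x : 0 < s -> 0 < nd m s x.
Proof. intros; unfold nd. apply Rdiv_lt_0_compat; auto. apply phi_pos. Qed.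

Lemma aff_p m s : 0 < s -> is_lim (fun x => (x - m)/s) p_infty p_infty.
Proof.
  intros Hs. apply is_lim_spec. intros M. exists (m + Rabs M * s + s). intros x Hx.
  apply Rmult_lt_reg_r with s; auto. unfold Rdiv. rewrite Rmult_assoc, Rinv_l by lra.
  pose proof (Rle_abs M). pose proof (Rabs_pos M). nra.
Qed.

Lemma aff_m m s : 0 < s -> is_lim (fun x => (x - m)/s) m_infty m_infty.
Proof.
  intros Hs. apply is_lim_spec. intros M. exists (m - Rabs M * s - s). intros x Hx.
  apply Rmult_lt_reg_r with s; auto. unfold Rdiv. rewrite Rmult_assoc, Rinv_l by lra.
  pose proof (Rle_abs (-M)). rewrite Rabs_Ropp in H. pose proof (Rabs_pos M). nra.
Qed.

Lemma comp_p (g : R -> R) (l : R) m s : 0 < s -> is_lim g p_infty l -> is_lim (fun x => g ((x - m)/s)) p_infty l.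
Proof.
  intros Hs H. apply (is_lim_comp g (fun x => (x - m)/s) p_infty l p_infty); auto.
  apply aff_p; auto. exists 0; intros; discriminate.
Qed.

Lemma comp_m (g : R -> R) (l : R) m s : 0 < s -> is_lim g m_infty l -> is_lim (fun x => g ((x - m)/s)) m_infty l.
Proof.
  intros Hs H. apply (is_lim_comp g (fun x => (x - m)/s) m_infty l m_infty); auto.
  apply aff_m; auto. exists 0; intros; discriminate.
Qed.

Lemma nc_lim_p m s : 0 < s -> is_lim (nc m s) p_infty 1.
Proof. intros; apply comp_p; auto; apply Phi_lim_p. Qed.
Lemma nc_lim_m m s : 0 < s -> is_lim (nc m s) m_infty 0.
Proof. intros; apply comp_m; auto; apply Phi_lim_m. Qed.

Lemma lim_scal_0 (f : R -> R) k x : is_lim f x 0 -> is_lim (fun t => f t * k) x 0.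
Proof.
  intros H. apply is_lim_ext with (fun t => k * f t). intros; ring.
  replace (Finite 0) with (Rbar_mult k 0) by (simpl; f_equal; ring). apply is_lim_scal_l; auto.
Qed.

Lemma nd_lim_p m s : 0 < s -> is_lim (nd m s) p_infty 0.
Proof. intros; unfold nd, Rdiv. apply (lim_scal_0 (fun x => phi ((x - m) * / s))). apply comp_p; auto. apply phi_lim_p. Qed.
Lemma nd_lim_m m s : 0 < s -> is_lim (nd m s) m_infty 0.
Proof. intros; unfold nd, Rdiv. apply (lim_scal_0 (fun x => phi ((x - m) * / s))). apply comp_m; auto. apply phi_lim_m. Qed.

Lemma xnc_lim_m m s : 0 < s -> is_lim (fun x => (x - m) * nc m s x) m_infty 0.
Proof.
  intros Hs. apply is_lim_ext with (fun x => ((x - m)/s) * Phi ((x - m)/s) * s).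
  intros; unfold nc; field; lra.
  apply (lim_scal_0 (fun x => (x - m) / s * Phi ((x - m) / s))).
  apply (comp_m (fun y => y * Phi y)); auto. apply yPhi_lim.
Qed.

Lemma xnc_lim_p m s : 0 < s -> is_lim (fun x => (x - m) * (1 - nc m s x)) p_infty 0.
Proof.
  intros Hs. apply is_lim_ext with (fun x => ((x - m)/s) * (1 - Phi ((x - m)/s)) * s).
  intros; unfold nc; field; lra.
  apply (lim_scal_0 (fun x => (x - m) / s * (1 - Phi ((x - m) / s)))).
  apply (comp_p (fun y => y * (1 - Phi y))); auto. apply yPhic_lim.
Qed.

Lemma nd_int m s : 0 < s -> is_RInt_gen (nd m s) mI pI 1.
Proof.
  intros Hs. replace 1 with (1 - 0) by ring. apply ftc_R with (nc m s).
  intros; apply nc_deriv; lra. intros; apply nd_cont; lra.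
  apply nc_lim_m; auto. apply nc_lim_p; auto.
Qed.

Lemma sqrt2pi_sq : sqrt (2*PI) ^ 2 = 2 * PI.
Proof. rewrite pow2_sqrt. auto. pose proof PI_RGT_0; lra. Qed.

Lemma conv_pt ma sa mb sb x : 0 < sa -> 0 < sb ->
  let S := sqrt (sa^2 + sb^2) in
  let t := sa * sb / S in
  let c := (ma * sb^2 + mb * sa^2) / (sa^2 + sb^2) in
  nd ma sa x * nd mb sb x = nd ma S mb * nd c t x.
Proof.
  intros Ha Hb S t c.
  assert (HQ : 0 < sa^2 + sb^2) by nra.
  assert (HS : 0 < S) by (apply sqrt_lt_R0; auto).
  assert (HS2 : S^2 = sa^2 + sb^2) by (apply pow2_sqrt; lra).
  assert (Ht : 0 < t) by (unfold t; apply Rdiv_lt_0_compat; nra).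
  assert (Hw1 : ((mb - ma)/S)^2 = (mb - ma)^2 / (sa^2 + sb^2)).
  { rewrite <- HS2. field. lra. }
  assert (Hw2 : ((x - c)/t)^2 = (x - c)^2 * (sa^2 + sb^2) / (sa^2 * sb^2)).
  { unfold t. rewrite <- HS2. field. split; lra. }
  assert (He : exp (- ((x - ma)/sa)^2/2) * exp (- ((x - mb)/sb)^2/2) =
               exp (- ((mb - ma)/S)^2/2) * exp (- ((x - c)/t)^2/2)).
  { rewrite <- !exp_plus. apply f_equal. rewrite Hw1, Hw2. unfold c. field. split; lra. }
  unfold nd, phi.
  transitivity (exp (- ((x - ma)/sa)^2/2) * exp (- ((x - mb)/sb)^2/2) / (sqrt (2*PI) ^ 2 * (sa * sb))).
  field. pose proof sqrt2pi_pos. repeat split; lra.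
  rewrite He.
  replace (sa * sb) with (S * t) by (unfold t; field; lra).
  field. pose proof sqrt2pi_pos. repeat split; lra.
Qed.

Lemma is_RInt_gen_kl (f : R -> R) k v : is_RInt_gen f mI pI v -> is_RInt_gen (fun x => k * f x) mI pI (k * v).
Proof. intros H. exact (is_RInt_gen_scal (Fa:=mI) (Fb:=pI) f k v H). Qed.

Lemma conv ma sa mb sb : 0 < sa -> 0 < sb ->
  is_RInt_gen (fun x => nd ma sa x * nd mb sb x) mI pI (nd ma (sqrt (sa^2 + sb^2)) mb).
Proof.
  intros Ha Hb.
  set (S := sqrt (sa^2 + sb^2)). set (t := sa * sb / S).
  set (c := (ma * sb^2 + mb * sa^2) / (sa^2 + sb^2)).
  assert (HS : 0 < S) by (apply sqrt_lt_R0; nra).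
  assert (Ht : 0 < t) by (unfold t; apply Rdiv_lt_0_compat; nra).
  eapply is_RInt_gen_ext. 2: { rewrite <- (Rmult_1_r (nd ma S mb)). apply is_RInt_gen_kl. apply (nd_int c t Ht). }
  apply filter_forall. intros ab x _. symmetry. apply conv_pt; auto.
Qed.

Lemma lipsch (g dg : R -> R) M a b : (forall y, is_derive g y (dg y)) -> (forall y, Rabs (dg y) <= M) ->
  Rabs (g b - g a) <= M * Rabs (b - a).
Proof.
  intros Hd HM.
  destruct (MVT_gen g a b dg) as [c [_ Hc]].
  - intros; apply Hd.
  - intros z _. apply continuity_pt_filterlim. apply exd_cont. eexists; apply Hd.
  - rewrite Hc, Rabs_mult. apply Rmult_le_compat_r. apply Rabs_pos. apply HM.
Qed.

Lemma taylor2 (f f1 f2 : R -> R) M x h : (forall y, is_derive f y (f1 y)) ->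
  (forall y, is_derive f1 y (f2 y)) -> (forall y, Rabs (f2 y) <= M) ->
  Rabs (f (x + h) - f x - h * f1 x) <= M * h^2.
Proof.
  intros H1 H2 HM.
  destruct (MVT_gen f x (x+h) f1) as [c [Hc Hc2]].
  - intros; apply H1.
  - intros z _. apply continuity_pt_filterlim. apply exd_cont. eexists; apply H1.
  - replace (x + h - x) with h in Hc2 by ring. rewrite Hc2.
    replace (f1 c * h - h * f1 x) with (h * (f1 c - f1 x)) by ring.
    rewrite Rabs_mult.
    assert (Rabs (f1 c - f1 x) <= M * Rabs (c - x)) by (apply lipsch with f2; auto).
    assert (Rabs (c - x) <= Rabs h).
    { unfold Rmin, Rmax in Hc. destruct (Rle_dec x (x+h));
      unfold Rabs; destruct (Rcase_abs (c - x)), (Rcase_abs h); lra. }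
    assert (0 <= M). { specialize (HM 0). pose proof (Rabs_pos (f2 0)). lra. }
    replace (M * h^2) with (Rabs h * (M * Rabs h)).
    apply Rmult_le_compat_l. apply Rabs_pos. pose proof (Rabs_pos (c - x)). nra.
    replace (h^2) with (Rabs h * Rabs h). ring.
    rewrite <- Rabs_mult. rewrite Rabs_pos_eq. ring. nra.
Qed.

Lemma is_RInt_gen_plusR (f g : R -> R) a b : is_RInt_gen f mI pI a -> is_RInt_gen g mI pI b ->
  is_RInt_gen (fun x => f x + g x) mI pI (a + b).
Proof. intros H1 H2. exact (is_RInt_gen_plus (Fa:=mI) (Fb:=pI) f g a b H1 H2). Qed.

Lemma is_RInt_gen_minusR (f g : R -> R) a b : is_RInt_gen f mI pI a -> is_RInt_gen g mI pI b ->
  is_RInt_gen (fun x => f x - g x) mI pI (a - b).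
Proof. intros H1 H2. exact (is_RInt_gen_minus (Fa:=mI) (Fb:=pI) f g a b H1 H2). Qed.

Lemma is_RInt_gen_extR (f g : R -> R) a : (forall x, f x = g x) -> is_RInt_gen f mI pI a -> is_RInt_gen g mI pI a.
Proof. intros H1 H2. apply (is_RInt_gen_ext (Fa:=mI) (Fb:=pI) f g a); auto. apply filter_forall; intros; apply H1. Qed.

Lemma is_RInt_gen_valR (f : R -> R) a b : a = b -> is_RInt_gen f mI pI a -> is_RInt_gen f mI pI b.
Proof. intros ->; auto. Qed.

Lemma is_RInt_gen_uniqR (f : R -> R) a b : is_RInt_gen f mI pI a -> is_RInt_gen f mI pI b -> a = b.
Proof.
  intros H1 H2.
  rewrite <- (is_RInt_gen_unique (V:=R_CompleteNormedModule) (Fa:=mI) (Fb:=pI) f a H1).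
  exact (is_RInt_gen_unique (V:=R_CompleteNormedModule) (Fa:=mI) (Fb:=pI) f b H2).
Qed.

Lemma mIpI_le : filter_prod mI pI (fun ab : R * R => fst ab <= snd ab).
Proof.
  exists (fun x => x < 0) (fun x => 0 < x).
  exists 0; auto. exists 0; auto. intros; simpl; lra.
Qed.

Lemma RInt_gen_boundR (f g : R -> R) lf lg : (forall x, Rabs (f x) <= g x) ->
  is_RInt_gen f mI pI lf -> is_RInt_gen g mI pI lg -> Rabs lf <= lg.
Proof.
  intros H H1 H2.
  exact (RInt_gen_norm (V:=R_CompleteNormedModule) (Fa:=mI) (Fb:=pI) f g lf lg mIpI_le
    (filter_forall _ (fun ab x _ => H x)) H1 H2).
Qed.

Lemma RInt_gen_ge0R (g : R -> R) lg : (forall x, 0 <= g x) -> is_RInt_gen g mI pI lg -> 0 <= lg.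
Proof.
  intros H H2.
  assert (H0 : is_RInt_gen (fun _ => 0) mI pI 0).
  { apply is_RInt_gen_valR with (0 - 0). rr. apply ftc_R with (fun _ => 0).
    intros; apply der_const. intros; apply continuous_const. apply is_lim_const. apply is_lim_const. }
  pose proof (RInt_gen_boundR (fun _ => 0) g 0 lg). rewrite Rabs_R0 in H1. apply H1; auto.
  intros; rewrite Rabs_R0; auto.
Qed.

Lemma yphi_bound y : Rabs (y * phi y) <= / sqrt (2*PI).
Proof.
  rewrite phi_E. unfold E.
  assert (1 + y^2/2 <= exp (y^2/2)) by apply exp_ineq1_le.
  assert (Rabs y <= exp (y^2/2)). { pose proof (Rabs_pos y).
    assert (Rabs y ^2 = y^2) by (rewrite RPow_abs; apply Rabs_pos_eq; nra). nra. }
  pose proof sqrt2pi_pos.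
  rewrite Rabs_mult, Rabs_mult. rewrite (Rabs_pos_eq (exp _)) by (apply Rlt_le, exp_pos).
  rewrite (Rabs_pos_eq (/ _)). 2: { apply Rlt_le, Rinv_0_lt_compat. lra. }
  replace (- y^2/2) with (- (y^2/2)) by field. rewrite exp_Ropp.
  assert (0 < exp (y^2/2)) by apply exp_pos.
  assert (Rabs y * / exp (y^2/2) <= 1).
  { apply Rmult_le_reg_r with (exp (y^2/2)); auto. rewrite Rmult_assoc, Rinv_l by lra. lra. }
  assert (0 < / sqrt (2*PI)) by (apply Rinv_0_lt_compat; lra).
  nra.
Qed.

Lemma nc_swap m s x : s <> 0 -> nc m s x = 1 - nc x s m.
Proof. intros. unfold nc. rewrite <- Phi_sym. f_equal. field; auto. Qed.

Lemma nd_swap m s x : s <> 0 -> nd m s x = nd x s m.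
Proof. intros. unfold nd. rewrite <- phi_even. f_equal. f_equal. field; auto. Qed.

Lemma ncu_deriv s x u : s <> 0 -> is_derive (fun u => nc u s x) u (- nd u s x).
Proof.
  intros Hs. apply der_ext with (f := fun u => 1 - nc x s u) (d := 0 - nd x s u).
  intros; symmetry; apply nc_swap; auto. rewrite (nd_swap u); auto. rr.
  apply (is_derive_minus (fun _ => 1) (nc x s)). apply der_const. apply nc_deriv; auto.
Qed.

Lemma ndu_deriv s x u : s <> 0 -> is_derive (fun u => - nd u s x) u ((u - x) / s^2 * nd u s x).
Proof.
  intros Hs. apply der_ext with (f := fun u => - nd x s u) (d := - (- (u - x) / s^2 * nd x s u)).
  intros; f_equal; symmetry; apply nd_swap; auto. rewrite (nd_swap u); auto. rr. auto.
  apply (is_derive_opp (nd x s)). apply nd_deriv; auto.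
Qed.

Lemma f2_bound s x u : 0 < s -> Rabs ((u - x) / s^2 * nd u s x) <= / sqrt (2*PI) / s^2.
Proof.
  intros Hs. unfold nd.
  replace ((u - x) / s ^ 2 * (phi ((x - u) / s) / s)) with (- (((x - u)/s) * phi ((x - u)/s)) / s^2) by (field; lra).
  unfold Rdiv. rewrite Rabs_mult, Rabs_Ropp. rewrite (Rabs_pos_eq (/ s^2)).
  apply Rmult_le_compat_r. apply Rlt_le, Rinv_0_lt_compat; nra. apply yphi_bound.
  apply Rlt_le, Rinv_0_lt_compat; nra.
Qed.

Definition Pf sa mb sb m x := nc m sa x * nd mb sb x.

Lemma Pf_cont sa mb sb m x : 0 < sa -> 0 < sb -> continuous (Pf sa mb sb m) x.
Proof.
  intros. apply exd_cont. eexists. apply (der_mul (nc m sa) (nd mb sb)).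
  apply nc_deriv; lra. apply nd_deriv; lra.
Qed.

Lemma Pf_prim sa mb sb m : 0 < sa -> 0 < sb ->
  exists L1 L2 : R, is_lim (fun x => RInt (Pf sa mb sb m) 0 x) m_infty L1 /\
                   is_lim (fun x => RInt (Pf sa mb sb m) 0 x) p_infty L2.
Proof.
  intros Ha Hb. apply (prim_lims _ (nd mb sb) (nc mb sb) 1).
  - intros; apply Pf_cont; auto.
  - intros x. unfold Pf. pose proof (nd_pos mb sb x Hb). unfold nc. pose proof (Phi_bounds ((x - m)/sa)). nra.
  - intros; apply nc_deriv; lra.
  - intros; apply nd_cont; lra.
  - intros x. unfold nc. pose proof (Phi_bounds ((x - mb)/sb)). rewrite Rabs_pos_eq; lra.
Qed.

Lemma prim_int (f : R -> R) (L1 L2 : R) : (forall x, continuous f x) ->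
  is_lim (fun x => RInt f 0 x) m_infty L1 -> is_lim (fun x => RInt f 0 x) p_infty L2 ->
  is_RInt_gen f mI pI (L2 - L1).
Proof. intros. apply ftc_R with (fun x => RInt f 0 x); auto. intros; apply RInt_prim_deriv; auto. Qed.

Definition Pv sa mb sb m := RInt_gen (Pf sa mb sb m) mI pI.

Lemma Pv_int sa mb sb m : 0 < sa -> 0 < sb -> is_RInt_gen (Pf sa mb sb m) mI pI (Pv sa mb sb m).
Proof.
  intros Ha Hb. destruct (Pf_prim sa mb sb m Ha Hb) as [L1 [L2 [H1 H2]]].
  assert (H := prim_int _ L1 L2 (fun x => Pf_cont sa mb sb m x Ha Hb) H1 H2).
  unfold Pv. rewrite (is_RInt_gen_unique (V:=R_CompleteNormedModule) (Fa:=mI) (Fb:=pI) _ _ H). exact H.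
Qed.

Lemma Pv_bound sa mb sb m h : 0 < sa -> 0 < sb ->
  Rabs (Pv sa mb sb (m + h) - Pv sa mb sb m - h * (- nd m (sqrt (sa^2 + sb^2)) mb))
    <= (/ sqrt (2*PI) / sa^2) * h^2.
Proof.
  intros Ha Hb.
  set (M := / sqrt (2*PI) / sa^2).
  apply (RInt_gen_boundR (fun x => Pf sa mb sb (m+h) x - Pf sa mb sb m x - h * (- (nd m sa x * nd mb sb x)))
     (fun x => M * h^2 * nd mb sb x)).
  - intros x. unfold Pf.
    replace (nc (m + h) sa x * nd mb sb x - nc m sa x * nd mb sb x - h * - (nd m sa x * nd mb sb x))
      with (nd mb sb x * (nc (m + h) sa x - nc m sa x - h * (- nd m sa x))) by ring.
    rewrite Rabs_mult, Rabs_pos_eq by (apply Rlt_le, nd_pos; auto).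
    rewrite Rmult_comm. apply Rmult_le_compat_r. apply Rlt_le, nd_pos; auto.
    apply (taylor2 (fun u => nc u sa x) (fun u => - nd u sa x) (fun u => (u - x) / sa^2 * nd u sa x)).
    intros; apply ncu_deriv; lra. intros; apply ndu_deriv; lra. intros; apply f2_bound; auto.
  - apply is_RInt_gen_minusR. apply is_RInt_gen_minusR; apply Pv_int; auto.
    apply is_RInt_gen_kl. apply is_RInt_gen_extR with (fun x => - (nd m sa x * nd mb sb x)).
    intros; ring. apply is_RInt_gen_valR with (-1 * nd m (sqrt (sa ^ 2 + sb ^ 2)) mb). rr.
    apply is_RInt_gen_extR with (fun x => -1 * (nd m sa x * nd mb sb x)). intros; ring.
    apply is_RInt_gen_kl. apply conv; auto.
  - apply is_RInt_gen_valR with (M * h^2 * 1). rr. apply is_RInt_gen_kl. apply nd_int; auto.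
Qed.

Lemma Pv_deriv sa mb sb m : 0 < sa -> 0 < sb ->
  is_derive (Pv sa mb sb) m (- nd m (sqrt (sa^2 + sb^2)) mb).
Proof.
  intros Ha Hb. apply is_derive_Reals. intros eps Heps.
  set (M := / sqrt (2*PI) / sa^2).
  assert (HM : 0 < M). { unfold M. apply Rdiv_lt_0_compat. apply Rinv_0_lt_compat, sqrt2pi_pos. nra. }
  assert (Hd : 0 < eps / (M + 1)) by (apply Rdiv_lt_0_compat; lra).
  exists (mkposreal _ Hd). intros h Hh0 Hh. simpl in Hh.
  pose proof (Pv_bound sa mb sb m h Ha Hb). fold M in H.
  set (C := - nd m (sqrt (sa ^ 2 + sb ^ 2)) mb) in *.
  replace ((Pv sa mb sb (m + h) - Pv sa mb sb m) / h - C)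
    with ((Pv sa mb sb (m + h) - Pv sa mb sb m - h * C) / h) by (field; auto).
  unfold Rdiv. rewrite Rabs_mult, Rabs_inv.
  assert (0 < Rabs h) by (apply Rabs_pos_lt; auto).
  apply Rmult_lt_reg_r with (Rabs h); auto. rewrite Rmult_assoc, Rinv_l by lra. rewrite Rmult_1_r.
  apply Rle_lt_trans with (M * h^2). auto.
  replace (h^2) with (Rabs h * Rabs h) by (rewrite <- Rabs_mult; rewrite Rabs_pos_eq; [ring|nra]).
  assert (Rabs h * (M + 1) < eps).
  { apply Rmult_lt_reg_r with (/ (M+1)). apply Rinv_0_lt_compat; lra.
    rewrite Rmult_assoc, Rinv_r by lra. rewrite Rmult_1_r. exact Hh. }
  nra.
Qed.

Lemma is_lim_minusR (f g : R -> R) x (a b : R) : is_lim f x a -> is_lim g x b -> is_lim (fun t => f t - g t) x (a - b).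
Proof. intros H1 H2. exact (is_lim_minus f g x a b (a - b) H1 H2 eq_refl). Qed.

Lemma is_lim_plusR (f g : R -> R) x (a b : R) : is_lim f x a -> is_lim g x b -> is_lim (fun t => f t + g t) x (a + b).
Proof. intros H1 H2. exact (is_lim_plus f g x a b (a + b) H1 H2 eq_refl). Qed.

Lemma refl_m (F : R -> R) (L : R) c : is_lim F p_infty L -> is_lim (fun x => F (c - x)) m_infty L.
Proof.
  intros H. apply (is_lim_comp F (fun x => c - x) m_infty L p_infty); auto.
  apply is_lim_spec; intros M; exists (c - M); intros x Hx; lra.
  exists 0; intros; discriminate.
Qed.

Lemma refl_p (F : R -> R) (L : R) c : is_lim F m_infty L -> is_lim (fun x => F (c - x)) p_infty L.
Proof.
  intros H. apply (is_lim_comp F (fun x => c - x) p_infty L m_infty); auto.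
  apply is_lim_spec; intros M; exists (c - M); intros x Hx; lra.
  exists 0; intros; discriminate.
Qed.

Lemma Pv_sym sa mb sb : 0 < sa -> 0 < sb -> Pv sa mb sb mb = 1/2.
Proof.
  intros Ha Hb.
  destruct (Pf_prim sa mb sb mb Ha Hb) as [L1 [L2 [H1 H2]]].
  set (f := Pf sa mb sb mb) in *.
  assert (Hf : forall x, continuous f x) by (intros; apply Pf_cont; auto).
  assert (Hv : Pv sa mb sb mb = L2 - L1).
  { apply (is_RInt_gen_uniqR f). apply Pv_int; auto. apply prim_int; auto. }
  assert (Href : forall x, f x + f (2*mb - x) = nd mb sb x).
  { intros x. unfold f, Pf. rewrite (nd_swap mb sb (2*mb - x)) by lra.
    replace (nd (2 * mb - x) sb mb) with (nd mb sb x).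
    rewrite (nc_swap mb sa (2*mb - x)) by lra.
    replace (nc (2 * mb - x) sa mb) with (nc mb sa x). ring.
    unfold nc; f_equal; field; lra. unfold nd; f_equal; f_equal; field; lra. }
  set (F := fun x => RInt f 0 x).
  assert (HI : is_RInt_gen (nd mb sb) mI pI ((L2 - L1) - (L1 - L2))).
  { apply ftc_R with (fun x => F x - F (2*mb - x)).
    - intros x. apply der_ext with (f := fun x => F x - F (2*mb - x)) (d := f x - (-1 * f (2*mb - x))).
      intros; reflexivity. rewrite <- Href. rr.
      apply (is_derive_minus F (fun x => F (2*mb - x))). apply RInt_prim_deriv; auto.
      apply (is_derive_comp F (fun x => 2*mb - x) x). apply RInt_prim_deriv; auto.
      auto_derive; auto; try rr.
    - intros; apply nd_cont; lra.
    - apply is_lim_minusR. exact H1. apply refl_m. exact H2.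
    - apply is_lim_minusR. exact H2. apply refl_p. exact H1. }
  pose proof (is_RInt_gen_uniqR _ _ _ HI (nd_int mb sb Hb)). rewrite Hv. lra.
Qed.

Lemma Phi0 : Phi 0 = 1/2.
Proof. rewrite Phi_eq. unfold G. rewrite RInt_point. unfold zero; simpl. field. Qed.

Lemma Pv_val sa mb sb m : 0 < sa -> 0 < sb -> Pv sa mb sb m = nc m (sqrt (sa^2 + sb^2)) mb.
Proof.
  intros Ha Hb. set (S := sqrt (sa^2 + sb^2)).
  assert (HS : 0 < S) by (apply sqrt_lt_R0; nra).
  assert (Hd : forall u, is_derive (fun u => Pv sa mb sb u - nc u S mb) u 0).
  { intros u. apply der_ext with (f := fun u => Pv sa mb sb u - nc u S mb)
      (d := (- nd u S mb) - (- nd u S mb)). intros; reflexivity. rr.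
    apply (is_derive_minus (Pv sa mb sb) (fun u => nc u S mb)). apply Pv_deriv; auto.
    apply ncu_deriv; lra. }
  pose proof (deriv0_const _ Hd m mb). simpl in H.
  rewrite Pv_sym in H; auto. unfold nc in H. replace ((mb - mb)/S) with 0 in H by (field; lra).
  rewrite Phi0 in H. unfold nc. change (Pv sa mb sb m - Phi ((mb - m) / S) = 1/2 - 1/2) in H. lra.
Qed.

Lemma is_lim_multR (f g : R -> R) x (a b : R) : is_lim f x a -> is_lim g x b -> is_lim (fun t => f t * g t) x (a * b).
Proof. intros H1 H2. exact (is_lim_mult f g x a b H1 H2 Logic.I). Qed.

Lemma cont_plus (f g : R -> R) x : continuous f x -> continuous g x -> continuous (fun t => f t + g t) x.
Proof. intros H1 H2. exact (continuous_plus (V:=R_NormedModule) f g x H1 H2). Qed.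
Lemma cont_minus (f g : R -> R) x : continuous f x -> continuous g x -> continuous (fun t => f t - g t) x.
Proof. intros H1 H2. exact (continuous_minus (V:=R_NormedModule) f g x H1 H2). Qed.
Lemma cont_mult (f g : R -> R) x : continuous f x -> continuous g x -> continuous (fun t => f t * g t) x.
Proof. intros H1 H2. exact (continuous_mult (K:=R_AbsRing) f g x H1 H2). Qed.
Lemma cont_c (c : R) x : continuous (fun _ : R => c) x.
Proof. exact (continuous_const (U:=R_UniformSpace) (V:=R_UniformSpace) c x). Qed.

Lemma lim_val (f : R -> R) x (a b : R) : a = b -> is_lim f x a -> is_lim f x b.
Proof. intros ->; auto. Qed.

Lemma is_lim_scalR (f : R -> R) k x (a : R) : is_lim f x a -> is_lim (fun t => k * f t) x (k * a).
Proof. intros H. exact (is_lim_scal_l f k x a H). Qed.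

Definition Jf ma sa mb sb x := nc ma sa x * (1 - nc mb sb x).

Lemma J_int ma sa mb sb : 0 < sa -> 0 < sb ->
  is_RInt_gen (Jf ma sa mb sb) mI pI
    (sqrt (sa^2 + sb^2) * U ((mb - ma) / sqrt (sa^2 + sb^2))).
Proof.
  intros Ha Hb. set (S := sqrt (sa^2 + sb^2)).
  assert (HS : 0 < S) by (apply sqrt_lt_R0; nra).
  assert (HS2 : S^2 = sa^2 + sb^2) by (apply pow2_sqrt; nra).
  set (d := mb - ma).
  set (A := nc ma sa). set (a := nd ma sa). set (b := nd mb sb).
  set (Bb := fun x => 1 - nc mb sb x).
  set (W := fun x => (x - ma) * A x * Bb x - sb^2 * (A x * b x) + sa^2 * (a x * Bb x)).
  assert (HA : forall x, is_derive A x (a x)) by (intros; apply nc_deriv; lra).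
  assert (Ha' : forall x, is_derive a x (- (x - ma) / sa^2 * a x)) by (intros; apply nd_deriv; lra).
  assert (Hb' : forall x, is_derive b x (- (x - mb) / sb^2 * b x)) by (intros; apply nd_deriv; lra).
  assert (HB : forall x, is_derive Bb x (- b x)).
  { intros x. apply der_ext with (f := Bb) (d := 0 - b x). reflexivity. rr.
    apply (is_derive_minus (fun _ => 1) (nc mb sb)). apply der_const. apply nc_deriv; lra. }
  assert (HW : forall x, is_derive W x (A x * Bb x - d * (A x * b x) - (sa^2 + sb^2) * (a x * b x))).
  { intros x. unfold W.
    apply der_ext with (f := fun x => ((x - ma) * A x) * Bb x - (fun _ => sb^2) x * (A x * b x) + (fun _ => sa^2) x * (a x * Bb x))
      (d := ((1 * A x + (x - ma) * a x) * Bb x + ((x - ma) * A x) * (- b x))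
            - (0 * (A x * b x) + sb^2 * (a x * b x + A x * (- (x - mb) / sb^2 * b x)))
            + (0 * (a x * Bb x) + sa^2 * ((- (x - ma) / sa^2 * a x) * Bb x + a x * (- b x)))).
    intros; reflexivity. unfold d. change (@eq R (((1 * A x + (x - ma) * a x) * Bb x + ((x - ma) * A x) * (- b x))
            - (0 * (A x * b x) + sb^2 * (a x * b x + A x * (- (x - mb) / sb^2 * b x)))
            + (0 * (a x * Bb x) + sa^2 * ((- (x - ma) / sa^2 * a x) * Bb x + a x * (- b x))))
            (A x * Bb x - (mb - ma) * (A x * b x) - (sa ^ 2 + sb ^ 2) * (a x * b x))). field. lra.
    apply der_plus. apply (is_derive_minus (fun x => (x - ma) * A x * Bb x) (fun x => sb^2 * (A x * b x))).
    apply (der_mul (fun x => (x - ma) * A x) Bb). apply (der_mul (fun x => x - ma) A).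
    auto_derive; auto; rr. apply HA. apply HB.
    apply (der_mul (fun _ => sb^2) (fun x => A x * b x)). apply der_const. apply (der_mul A b). apply HA. apply Hb'.
    apply (der_mul (fun _ => sa^2) (fun x => a x * Bb x)). apply der_const. apply (der_mul a Bb). apply Ha'. apply HB. }
  assert (cA : forall x, continuous A x) by (intros; apply nc_cont; lra).
  assert (ca : forall x, continuous a x) by (intros; apply nd_cont; lra).
  assert (cb : forall x, continuous b x) by (intros; apply nd_cont; lra).
  assert (cB : forall x, continuous Bb x) by (intros; apply cont_minus; [apply cont_c | apply nc_cont; lra]).
  assert (HW0 : is_RInt_gen (fun x => A x * Bb x - d * (A x * b x) - (sa^2 + sb^2) * (a x * b x)) mI pI (0 - 0)).
  { apply ftc_R with W. exact HW.
    - intros x. apply cont_minus. apply cont_minus. apply cont_mult; auto.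
      apply cont_mult. apply cont_c. apply cont_mult; auto.
      apply cont_mult. apply cont_c. apply cont_mult; auto.
    - unfold W. apply lim_val with ((0 * 1) - sb^2 * (0 * 0) + sa^2 * (0 * 1)). ring.
      apply is_lim_plusR. apply is_lim_minusR. apply is_lim_multR.
      apply is_lim_ext with (fun x => (x - ma) * nc ma sa x). reflexivity. apply xnc_lim_m; auto.
      unfold Bb. apply lim_val with (1 - 0). ring. apply is_lim_minusR. apply is_lim_const. apply nc_lim_m; auto.
      apply is_lim_scalR. apply is_lim_multR. apply nc_lim_m; auto. apply nd_lim_m; auto.
      apply is_lim_scalR. apply is_lim_multR. apply nd_lim_m; auto.
      unfold Bb. apply lim_val with (1 - 0). ring. apply is_lim_minusR. apply is_lim_const. apply nc_lim_m; auto.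
    - unfold W. apply lim_val with ((1 * (0 + d * 0)) - sb^2 * (1 * 0) + sa^2 * (0 * 0)). ring.
      apply is_lim_plusR. apply is_lim_minusR.
      apply is_lim_ext with (fun x => A x * ((x - mb) * (1 - nc mb sb x) + d * Bb x)).
      intros; unfold Bb, d; ring.
      apply is_lim_multR. apply nc_lim_p; auto. apply is_lim_plusR. apply xnc_lim_p; auto.
      apply is_lim_scalR. unfold Bb. apply lim_val with (1 - 1). ring. apply is_lim_minusR. apply is_lim_const. apply nc_lim_p; auto.
      apply is_lim_scalR. apply is_lim_multR. apply nc_lim_p; auto. apply nd_lim_p; auto.
      apply is_lim_scalR. apply is_lim_multR. apply nd_lim_p; auto.
      unfold Bb. apply lim_val with (1 - 1). ring. apply is_lim_minusR. apply is_lim_const. apply nc_lim_p; auto. }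
  assert (HP := Pv_int sa mb sb ma Ha Hb). rewrite Pv_val in HP by auto.
  assert (HC := conv ma sa mb sb Ha Hb).
  fold S in HP, HC.
  apply is_RInt_gen_valR with ((0 - 0) + d * nc ma S mb + (sa^2+sb^2) * nd ma S mb).
  - match goal with |- ?a = ?b => change (@eq R a b) end. unfold U, nc, nd, phi. unfold d. rewrite <- HS2. pose proof sqrt2pi_pos. field. repeat split; lra.
  - apply is_RInt_gen_extR with (fun x => ((A x * Bb x - d * (A x * b x) - (sa^2 + sb^2) * (a x * b x))
       + d * Pf sa mb sb ma x) + (sa^2 + sb^2) * (nd ma sa x * nd mb sb x)).
    + intros x. unfold Jf, Pf, A, a, b, Bb. ring.
    + apply is_RInt_gen_plusR. apply is_RInt_gen_plusR. exact HW0.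
      apply is_RInt_gen_kl; exact HP. apply is_RInt_gen_kl; exact HC.
Qed.

Lemma sumR_ext n f g : (forall j, (j < n)%nat -> f j = g j) -> sumR n f = sumR n g.
Proof. induction n; simpl; intros H; auto. rewrite IHn, H; auto. Qed.

Lemma sumR_plus n f g : sumR n (fun j => f j + g j) = sumR n f + sumR n g.
Proof. induction n; simpl. ring. rewrite IHn. ring. Qed.

Lemma sumR_minus n f g : sumR n (fun j => f j - g j) = sumR n f - sumR n g.
Proof. induction n; simpl. ring. rewrite IHn. ring. Qed.

Lemma sumR_kl n k f : k * sumR n f = sumR n (fun j => k * f j).
Proof. induction n; simpl. ring. rewrite <- IHn. ring. Qed.

Lemma sumR_kr n k f : sumR n f * k = sumR n (fun j => f j * k).
Proof. induction n; simpl. ring. rewrite <- IHn. ring. Qed.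

Lemma sumR_prod n m f g : sumR n f * sumR m g = sumR n (fun j => sumR m (fun k => f j * g k)).
Proof. rewrite sumR_kr. apply sumR_ext. intros. rewrite Rmult_comm, sumR_kr. apply sumR_ext; intros; ring. Qed.

Lemma int_sum n (f : nat -> R -> R) v : (forall j, (j < n)%nat -> is_RInt_gen (f j) mI pI (v j)) ->
  is_RInt_gen (fun x => sumR n (fun j => f j x)) mI pI (sumR n v).
Proof.
  induction n; intros H; simpl.
  - apply is_RInt_gen_valR with (0 - 0). rr. apply ftc_R with (fun _ => 0).
    intros; apply der_const. intros; apply continuous_const. apply is_lim_const. apply is_lim_const.
  - apply is_RInt_gen_plusR. apply IHn. intros; apply H; lia. apply H; lia.
Qed.

Definition Jv ma sa mb sb := sqrt (sa^2 + sb^2) * U ((mb - ma) / sqrt (sa^2 + sb^2)).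

Lemma dbl_int n m (g : nat -> nat -> R -> R) (v : nat -> nat -> R) :
  (forall j k, (j < n)%nat -> (k < m)%nat -> is_RInt_gen (g j k) mI pI (v j k)) ->
  is_RInt_gen (fun x => sumR n (fun j => sumR m (fun k => g j k x))) mI pI
    (sumR n (fun j => sumR m (fun k => v j k))).
Proof.
  intros H. apply (int_sum n (fun j x => sumR m (fun k => g j k x))).
  intros j Hj. apply (int_sum m (fun k x => g j k x)). intros; apply H; auto.
Qed.

Theorem mainTheorem4 (n : nat) (p mu s : nat -> R) (n' : nat) (p' mu' s' : nat -> R)
  (H1 : is_mixture n p mu s) (H2 : is_mixture n' p' mu' s')
  (Hs : forall j, (j < n)%nat -> 0 < s j)
  (Hs' : forall k, (k < n')%nat -> 0 < s' k) :
  is_RInt_gen (fun x => (CDF n p mu s x - CDF n' p' mu' s' x) ^ 2)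
    (Rbar_locally m_infty) (Rbar_locally p_infty)
    (cross n p mu s n' p' mu' s' - self n p mu s - self n' p' mu' s')
  /\ (C2 n p mu s n' p' mu' s') ^ 2
     = cross n p mu s n' p' mu' s' - self n p mu s - self n' p' mu' s'.
Proof.
  destruct H1 as [_ Hp]. destruct H2 as [_ Hp'].
  set (T1 := fun x => sumR n (fun j => sumR n' (fun k =>
      p j * p' k * (Jf (mu j) (s j) (mu' k) (s' k) x + Jf (mu' k) (s' k) (mu j) (s j) x)))).
  set (T2 := fun x => sumR n (fun j => sumR n (fun k => p j * p k * Jf (mu k) (s k) (mu j) (s j) x))).
  set (T3 := fun x => sumR n' (fun j => sumR n' (fun k => p' j * p' k * Jf (mu' k) (s' k) (mu' j) (s' j) x))).
  assert (Hpt : forall x, T1 x - T2 x - T3 x = (CDF n p mu s x - CDF n' p' mu' s' x)^2).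
  { intros x. unfold CDF.
    set (F1 := sumR n (fun j => p j * Phi ((x - mu j) / s j))).
    set (F2 := sumR n' (fun j => p' j * Phi ((x - mu' j) / s' j))).
    set (C1 := sumR n (fun j => p j * (1 - Phi ((x - mu j) / s j)))).
    set (C2' := sumR n' (fun j => p' j * (1 - Phi ((x - mu' j) / s' j)))).
    assert (E1 : C1 = 1 - F1).
    { rewrite <- Hp. unfold C1, F1. rewrite <- sumR_minus. apply sumR_ext; intros; ring. }
    assert (E2 : C2' = 1 - F2).
    { rewrite <- Hp'. unfold C2', F2. rewrite <- sumR_minus. apply sumR_ext; intros; ring. }
    transitivity (F1 * C2' + C1 * F2 - C1 * F1 - C2' * F2).
    2: rewrite E1, E2; ring.
    assert (ET1 : T1 x = F1 * C2' + C1 * F2).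
    { unfold T1, F1, C2', C1, F2. rewrite !sumR_prod. rewrite <- sumR_plus.
      apply sumR_ext; intros j _. rewrite <- sumR_plus. apply sumR_ext; intros k _.
      unfold Jf, nc. ring. }
    assert (ET2 : T2 x = C1 * F1).
    { unfold T2, F1, C1. rewrite !sumR_prod.
      apply sumR_ext; intros j _. apply sumR_ext; intros k _. unfold Jf, nc. ring. }
    assert (ET3 : T3 x = C2' * F2).
    { unfold T3, F2, C2'. rewrite !sumR_prod.
      apply sumR_ext; intros j _. apply sumR_ext; intros k _. unfold Jf, nc. ring. }
    rewrite ET1, ET2, ET3. ring. }
  assert (Hint : is_RInt_gen (fun x => (CDF n p mu s x - CDF n' p' mu' s' x) ^ 2) mI pI
    (cross n p mu s n' p' mu' s' - self n p mu s - self n' p' mu' s')).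
  { apply is_RInt_gen_extR with (fun x => T1 x - T2 x - T3 x). exact Hpt.
    apply is_RInt_gen_minusR. apply is_RInt_gen_minusR.
    - unfold T1, cross.
      apply is_RInt_gen_valR with (sumR n (fun j => sumR n' (fun k =>
        p j * p' k * (Jv (mu j) (s j) (mu' k) (s' k) + Jv (mu' k) (s' k) (mu j) (s j))))).
      apply sumR_ext; intros j Hj; apply sumR_ext; intros k Hk. unfold Jv.
      rewrite (Rplus_comm (s' k ^ 2)). ring.
      apply dbl_int. intros j k Hj Hk. apply is_RInt_gen_kl. apply is_RInt_gen_plusR; apply J_int; auto.
    - unfold T2, self.
      apply is_RInt_gen_valR with (sumR n (fun j => sumR n (fun k => p j * p k * Jv (mu k) (s k) (mu j) (s j)))).
      apply sumR_ext; intros j Hj; apply sumR_ext; intros k Hk. unfold Jv.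
      rewrite (Rplus_comm (s k ^ 2)). ring.
      apply dbl_int. intros j k Hj Hk. apply is_RInt_gen_kl. apply J_int; auto.
    - unfold T3, self.
      apply is_RInt_gen_valR with (sumR n' (fun j => sumR n' (fun k => p' j * p' k * Jv (mu' k) (s' k) (mu' j) (s' j)))).
      apply sumR_ext; intros j Hj; apply sumR_ext; intros k Hk. unfold Jv.
      rewrite (Rplus_comm (s' k ^ 2)). ring.
      apply dbl_int. intros j k Hj Hk. apply is_RInt_gen_kl. apply J_int; auto. }
  split. exact Hint.
  unfold C2.
  rewrite (is_RInt_gen_unique (V:=R_CompleteNormedModule) (Fa:=mI) (Fb:=pI) _ _ Hint).
  apply pow2_sqrt. apply (RInt_gen_ge0R _ _ (fun x => pow2_ge_0 _) Hint).
Qed.
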